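(* Let $\Omega\in\{\Omega_A,\Omega_B,\Omega_C\}$, let $x,y$ be commuting indeterminates and $f(x,y)=256x+3(4y-3)(4y+1)\in\mathbb C[x,y]$. For every $p(x,y)\in\mathbb C[x,y]$, one has $\sharp(p(\Omega,\delta))=0$ if and only if $f(x,y)$ divides $p(x,y)$ in $\mathbb C[x,y]$.
   Context: All algebras are unital associative over $\mathbb C$, $[x,y]=xy-yx$, $\mathbf i=\sqrt{-1}$. $U(\mathfrak{sl}_2)$ is generated by $E,F,H$ with $[H,E]=2E$, $[H,F]=-2F$, $[E,F]=H$; $\Lambda=EF+FE+\frac{H^2}{2}$. $\Re$ is generated by $A,B,C,\Delta$ with $[A,B]=[B,C]=[C,A]=2\Delta$ and with $\alpha=[A,\Delta]+AC-BA$, $\beta=[B,\Delta]+BA-CB$, $\gamma=[C,\Delta]+CB-AC$ central; $\delta=A+B+C$ (central). $\Omega_A=\Delta^2+\tfrac{BAC+CAB}{2}+A^2+B\gamma-C\beta-A\delta$, $\Omega_B=\Delta^2+\tfrac{CBA+ABC}{2}+B^2+C\alpha-A\gamma-B\delta$, $\Omega_C=\Delta^2+\tfrac{ACB+BCA}{2}+C^2+A\beta-B\alpha-C\delta$; these are central, so $p(\Omega,\delta)$ is well defined. $\sharp:\Re\to U(\mathfrak{sl}_2)$ is the unique algebra homomorphism with $A\mapsto \frac{(E+F-2)(E+F+2)}{16}$, $B\mapsto\frac{(H-2)(H+2)}{16}$, $C\mapsto\frac{(\mathbf iE-\mathbf iF-2)(\mathbf iE-\mathbf iF+2)}{16}$,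 $\Delta\mapsto\frac{(H+2)F^2-(H-2)E^2}{64}$. *)

(* Defs.v *)
From HB Require Import structures.
From mathcomp Require Import all_boot all_order all_algebra.
From mathcomp Require Import complex.
From mathcomp Require Import Rstruct.
Set Implicit Arguments. Unset Strict Implicit. Unset Printing Implicit Defensive.
Import Order.TTheory GRing.Theory Num.Theory.
Local Open Scope ring_scope.

Definition CC : fieldType := (Rdefinitions.R)[i]%C.
Definition iC : CC := Complex 0 1.

Definition comm (A : algType CC) (x y : A) : A := x * y - y * x.

Definition sl2_rel (A : algType CC) (E F H : A) : Prop :=
  [/\ comm H E = 2%:R * E, comm H F = - (2%:R * F) & comm E F = H].

(** An element of U(sl_2) is described uniformly as a noncommutative
    polynomial expression [t] in the generators E, F, H (i.e. a function
    that, for every C-algebra A and every E F H in A, produces an element of A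
    using the algebra operations). Such an element is zero in U(sl_2) iff
    it vanishes for every triple E, F, H satisfying the sl_2 relations in every
    C-algebra (universal property of U(sl_2), which is itself such an algebra). *)
Definition U_sl2_zero (t : forall A : algType CC, A -> A -> A -> A) : Prop :=
  forall (A : algType CC) (E F H : A), sl2_rel E F H -> t A E F H = 0.

(** The Racah algebra expressions, written for arbitrary elements a b c d
    (standing for A, B, C, Delta) of a C-algebra. *)
Section Racah.
Variable (R : algType CC).
Variables (a b c d : R).
Definition r_alpha : R := comm a d + a * c - b * a.
Definition r_beta  : R := comm b d + b * a - c * b.
Definition r_gamma : R := comm c d + c * b - a * c.
Definition r_delta : R := a + b + c.
Definition r_OmegaA : R :=
  d ^+ 2 + (2%:R : CC)^-1 *: (b * a * c + c * a * b) + a ^+ 2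
  + b * r_gamma - c * r_beta - a * r_delta.
Definition r_OmegaB : R :=
  d ^+ 2 + (2%:R : CC)^-1 *: (c * b * a + a * b * c) + b ^+ 2
  + c * r_alpha - a * r_gamma - b * r_delta.
Definition r_OmegaC : R :=
  d ^+ 2 + (2%:R : CC)^-1 *: (a * c * b + b * c * a) + c ^+ 2
  + a * r_beta - b * r_alpha - c * r_delta.
End Racah.

Section Sharp.
Variable (A : algType CC).
Variables (E F H : A).
Definition sharpA : A := (16%:R : CC)^-1 *: ((E + F - 2%:R) * (E + F + 2%:R)).
Definition sharpB : A := (16%:R : CC)^-1 *: ((H - 2%:R) * (H + 2%:R)).
Definition sharpC : A :=
  (16%:R : CC)^-1 *: ((iC *: E - iC *: F - 2%:R) * (iC *: E - iC *: F + 2%:R)).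
Definition sharpDelta : A :=
  (64%:R : CC)^-1 *: ((H + 2%:R) * F ^+ 2 - (H - 2%:R) * E ^+ 2).
End Sharp.

Inductive OmegaIdx := OmA | OmB | OmC.

(** sharp(Omega) and sharp(delta): since sharp is an algebra homomorphism,
    these are the Racah expressions evaluated at the images of A, B, C, Delta. *)
Definition sharpOmega (k : OmegaIdx) (A : algType CC) (E F H : A) : A :=
  let a := sharpA E F in let b := sharpB H in
  let c := sharpC E F in let d := sharpDelta E F H in
  match k with
  | OmA => r_OmegaA a b c d
  | OmB => r_OmegaB a b c d
  | OmC => r_OmegaC a b c d
  end.
Definition sharpdelta (A : algType CC) (E F H : A) : A :=
  r_delta (sharpA E F) (sharpB H) (sharpC E F).

(** Bivariate polynomials C[x,y] are represented as {poly {poly CC}}: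
    the inner variable is x, the outer variable is y.
    [peval2 p u v] = p(u, v), evaluating x at u and y at v (in a possibly
    noncommutative algebra; the monomial x^j y^i is sent to u^j v^i). *)
Definition peval2 (A : algType CC) (p : {poly {poly CC}}) (u v : A) : A :=
  \sum_(i < size p) \sum_(j < size p`_i) (p`_i)`_j *: (u ^+ j * v ^+ i).

Definition polX : {poly {poly CC}} := ('X)%:P.
Definition polY : {poly {poly CC}} := 'X.

Definition fxy : {poly {poly CC}} :=
  256%:R * polX + 3%:R * (4%:R * polY - 3%:R) * (4%:R * polY + 1).

(* Main.v *)
Require Import Defs.
From Stdlib Require Import ZArith.
From HB Require Import structures.
From mathcomp Require Import all_boot all_order all_algebra.
From mathcomp Require Import complex Rstruct.
From mathcomp Require Import ssrZ.
From mathcomp Require Import ring zify.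
Set Implicit Arguments. Unset Strict Implicit. Unset Printing Implicit Defensive.
Import Order.TTheory GRing.Theory Num.Theory.
Local Open Scope ring_scope.



Local Open Scope ring_scope.
Lemma natC_neq0 n : (n.+1%:R : CC) != 0.
Proof. have : (n.+1%:R : complex Rdefinitions.R) != 0 by rewrite pnatr_eq0. exact. Qed.
Lemma natC_inj m n : (m%:R : CC) = n%:R -> m = n.
Proof. have : (m%:R == n%:R :> complex Rdefinitions.R) = (m == n) by rewrite eqr_nat.
move=> h1 h2; apply/eqP; rewrite -h1; exact/eqP. Qed.
Lemma iC2 : iC * iC = -1.
Proof. have := @sqr_i Rdefinitions.R. by rewrite expr2. Qed.

Definition dy := (Z * nat)%type.
Fixpoint pow2 (k : nat) : Z := match k with O => (Zpos xH) | S k => (Z.mul (Zpos (xO xH)) (pow2 k)) end.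
Definition dmul (a b : dy) : dy := (Z.mul a.1 b.1, (a.2 + b.2)%N).
Definition dopp (a : dy) : dy := (Z.opp a.1, a.2).
Definition dadd (a b : dy) : dy :=
  let e := maxn a.2 b.2 in
  (Z.add (Z.mul a.1 (pow2 (subn e a.2))) (Z.mul b.1 (pow2 (subn e b.2))), e).

Definition tm := (dy * seq nat)%type.

Inductive ex :=
| Gen of nat | One | Nat of nat | Add of ex & ex | Mul of ex & ex
| Opp of ex | Inv of nat & ex | Pow of ex & nat.

Definition one_t : seq tm := [:: (((Zpos xH), O), [::])].
Definition mulT (l1 l2 : seq tm) : seq tm :=
  [seq (dmul t1.1 t2.1, t1.2 ++ t2.2) | t1 <- l1, t2 <- l2].

Fixpoint expand (e : ex) : seq tm :=
  match e with
  | Gen n => [:: (((Zpos xH), O), [:: n])]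
  | One => one_t
  | Nat n => [:: ((Z.of_nat n, O), [::])]
  | Add a b => expand a ++ expand b
  | Mul a b => mulT (expand a) (expand b)
  | Opp a => [seq (dopp t.1, t.2) | t <- expand a]
  | Inv k a => [seq (dmul ((Zpos xH), k) t.1, t.2) | t <- expand a]
  | Pow a n => iter n (mulT (expand a)) one_t
  end.

Fixpoint rw (w : seq nat) : option (seq tm) :=
  match w with
  | S O :: O :: v => Some [:: (((Zpos xH), O), O :: S O :: v); ((Zneg (xO xH)), O, O :: v)]
  | S (S O) :: O :: v => Some [:: (((Zpos xH), O), O :: S (S O) :: v); (((Zpos xH), O), S O :: v)]
  | S (S O) :: S O :: v => Some [:: (((Zpos xH), O), S O :: S (S O) :: v); ((Zneg (xO xH)), O, S (S O) :: v)]
  | x :: v => omap (map (fun t : tm => (t.1, x :: t.2))) (rw v)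
  | [::] => None
  end.

Definition stepT (t : tm) : seq tm :=
  match rw t.2 with
  | Some l => [seq (dmul t.1 s.1, s.2) | s <- l]
  | None => [:: t]
  end.
Definition step (l : seq tm) : seq tm := foldr (fun t acc => stepT t ++ acc) [::] l.

Fixpoint ins (t : tm) (l : seq tm) : seq tm :=
  match l with
  | [::] => [:: t]
  | s :: l' => if s.2 == t.2 then (dadd s.1 t.1, s.2) :: l' else s :: ins t l'
  end.
Definition collect (l : seq tm) : seq tm := foldr ins [::] l.
Definition clean (l : seq tm) : seq tm := filter (fun t : tm => ~~ Z.eqb t.1.1 Z0) l.
Fixpoint norm (k : nat) (l : seq tm) : seq tm :=
  match k with O => l | S k => norm k (clean (collect (step l))) end.

Definition tC : CC := (2%:R)^-1.
Definition dR (a : dy) : CC := (int_of_Z a.1)%:~R * tC ^+ a.2.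

Lemma dR_mul a b : dR (dmul a b) = dR a * dR b.
Proof.
rewrite /dR /dmul /= (rmorphM int_of_Z a.1 b.1) intrM exprD.
by rewrite mulrACA.
Qed.

Lemma dR_opp a : dR (dopp a) = - dR a.
Proof. by rewrite /dR /dopp /= (rmorphN int_of_Z a.1) intrN mulNr. Qed.

Lemma int_of_Z_pow2 k : ((int_of_Z (pow2 k))%:~R : CC) = 2%:R ^+ k.
Proof.
elim: k => [|k IH] //=; rewrite (rmorphM int_of_Z (Zpos (xO xH)) (pow2 k)) intrM IH exprS //.
Qed.

Lemma two_tC k : (2%:R : CC) ^+ k * tC ^+ k = 1.
Proof. by rewrite -exprMn /tC mulfV ?expr1n // natC_neq0. Qed.

Lemma dR_shift a e : (a.2 <= e)%N ->
  (int_of_Z (Z.mul a.1 (pow2 (subn e a.2))))%:~R * tC ^+ e = dR a.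
Proof.
move=> le; rewrite (rmorphM int_of_Z a.1) intrM int_of_Z_pow2 /dR.
rewrite -{2}(subnK le) exprD mulrA -(mulrA _ (2%:R ^+ _)) two_tC mulr1 //.
Qed.

Lemma dR_add a b : dR (dadd a b) = dR a + dR b.
Proof.
rewrite {1}/dR /dadd /= (rmorphD int_of_Z) intrD mulrDl.
by rewrite !dR_shift // ?leq_maxl ?leq_maxr.
Qed.

Lemma dR0 e : dR (Z0, e) = 0.
Proof. by rewrite /dR /= mul0r. Qed.

Lemma dR1 : dR ((Zpos xH), O) = 1.
Proof. by rewrite /dR /= mulr1. Qed.

Lemma dRm2 : dR ((Zneg (xO xH)), O) = - 2%:R.
Proof. by rewrite /dR /= mulr1. Qed.

Lemma dRnat n : dR (Z.of_nat n, O) = n%:R.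
Proof.
rewrite /dR /= mulr1; case: n => //= n.
by rewrite SuccNat2Pos.id_succ.
Qed.

Lemma dRinv k : dR ((Zpos xH), k) = ((expn 2 k)%:R)^-1.
Proof. by rewrite /dR /= mul1r natrX /tC exprVn. Qed.

Section Sem.
Variable A : algType CC.
Variables E F H : A.

Definition gen (n : nat) : A := match n with O => F | S O => H | _ => E end.
Definition wI (w : seq nat) : A := foldr (fun l acc => gen l * acc) 1 w.
Definition tI (l : seq tm) : A := foldr (fun t acc => dR t.1 *: wI t.2 + acc) 0 l.

Fixpoint interp (e : ex) : A :=
  match e with
  | Gen n => gen n
  | One => 1
  | Nat n => n%:R
  | Add a b => interp a + interp b
  | Mul a b => interp a * interp b
  | Opp a => - interp a
  | Inv k a => ((expn 2 k)%:R : CC)^-1 *: interp a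
  | Pow a n => interp a ^+ n
  end.

Lemma wI_cat w1 w2 : wI (w1 ++ w2) = wI w1 * wI w2.
Proof. by elim: w1 => [|x w IH] /=; rewrite ?mul1r // IH mulrA. Qed.

Lemma tI_cat l1 l2 : tI (l1 ++ l2) = tI l1 + tI l2.
Proof. by elim: l1 => [|t l IH] /=; rewrite ?add0r // IH addrA. Qed.

Lemma tI_map_scale c l :
  tI [seq (dmul c t.1, t.2) | t <- l] = dR c *: tI l.
Proof.
elim: l => [|t l IH] /=; first by rewrite scaler0.
by rewrite IH dR_mul scalerDr scalerA.
Qed.

Lemma tI_opp l : tI [seq (dopp t.1, t.2) | t <- l] = - tI l.
Proof.
elim: l => [|t l IH] /=; first by rewrite oppr0.
by rewrite IH dR_opp scaleNr opprD.
Qed.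

Lemma tI_mulT l1 l2 : tI (mulT l1 l2) = tI l1 * tI l2.
Proof.
elim: l1 => [|t l IH] /=; first by rewrite mul0r.
rewrite /mulT allpairs_cons tI_cat -/(mulT l l2) IH mulrDl; congr (_ + _).
clear IH; elim: l2 => [|s l2 IH2] /=; first by rewrite mulr0.
rewrite IH2 mulrDr; congr (_ + _). by rewrite dR_mul wI_cat -(scalerAl (dR t.1) (wI t.2) (dR s.1 *: wI s.2)) -(scalerAr (dR s.1) (wI t.2) (wI s.2)) scalerA.
Qed.

Lemma tI_one : tI one_t = 1.
Proof. by rewrite /= dR1 scale1r addr0. Qed.

Lemma expand_sound e : interp e = tI (expand e).
Proof.
elim: e => [n||n|a IHa b IHb|a IHa b IHb|a IHa|k a IHa|a IHa n] /=.
- by rewrite dR1 scale1r addr0 mulr1.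
- by rewrite dR1 scale1r addr0.
- by rewrite dRnat addr0 scaler_nat.
- by rewrite tI_cat IHa IHb.
- by rewrite tI_mulT IHa IHb.
- by rewrite tI_opp IHa.
- by rewrite (tI_map_scale ((Zpos xH), k)) dRinv IHa.
- elim: n => [|n IH] /=; first by rewrite expr0 /= dR1 scale1r addr0.
  by rewrite exprS tI_mulT IH IHa.
Qed.

Hypothesis Hsl : sl2_rel E F H.

Lemma relEH : E * H = H * E - 2%:R * E.
Proof. case: Hsl => h _ _; move: h; rewrite /comm => h. by rewrite -h opprB addrC subrK. Qed.
Lemma relHF : H * F = F * H - 2%:R * F.
Proof. case: Hsl => _ h _; move: h; rewrite /comm => /eqP; rewrite subr_eq => /eqP ->.
by rewrite addrC. Qed.
Lemma relEF : E * F = F * E + H.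
Proof. case: Hsl => _ _ h; move: h; rewrite /comm => /eqP; rewrite subr_eq => /eqP ->.
by rewrite addrC. Qed.

Lemma rw_sound w l : rw w = Some l -> wI w = tI l.
Proof.
elim: w l => [|x w IH] l //.
have gen_case : (forall l', rw w = Some l' -> wI w = tI l') ->
   omap (map (fun t : tm => (t.1, x :: t.2))) (rw w) = Some l -> wI (x :: w) = tI l.
  move=> IH'; case E1: (rw w) => [l'|] //= [<-]; rewrite (IH' l' E1) /=.
  elim: l' {E1} => [|t l' IHl] /=; first by rewrite mulr0.
  by rewrite -IHl mulrDr (scalerAr (dR t.1) (gen x) (wI t.2)).
case: x gen_case => [|[|[|x]]] gen_case; try by apply: gen_case.
- case: w IH gen_case => [|[|y] w] IH gen_case; try by apply: gen_case.
  move=> [<-] /=; rewrite dR1 dRm2 !scale1r addr0 mulrA relHF.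
  by rewrite mulrBl -mulrA scaleNr scaler_nat -mulrA mulr_natl.
- case: w IH gen_case => [|[|[|y]] w] IH gen_case; try by apply: gen_case.
  + move=> [<-] /=; rewrite dR1 !scale1r addr0 mulrA relEF mulrDl -mulrA //.
  + move=> [<-] /=; rewrite dR1 dRm2 !scale1r addr0 mulrA relEH.
    by rewrite mulrBl -mulrA scaleNr scaler_nat -mulrA mulr_natl.
Qed.

Lemma stepT_sound t : tI (stepT t) = tI [:: t].
Proof.
rewrite /stepT; case E1: (rw t.2) => [l|] //.
by rewrite tI_map_scale -(rw_sound E1) /= addr0.
Qed.

Lemma step_sound l : tI (step l) = tI l.
Proof. elim: l => [|t l IH] //=; by rewrite tI_cat IH stepT_sound /= addr0. Qed.

Lemma ins_sound t l : tI (ins t l) = tI (t :: l).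
Proof.
elim: l => [|s l IH] //=.
case: eqP => [eq|_] /=.
- by rewrite dR_add scalerDl -eq addrCA addrA.
- by rewrite IH /= addrCA.
Qed.

Lemma collect_sound l : tI (collect l) = tI l.
Proof. by elim: l => [|t l IH] //=; rewrite ins_sound /= IH. Qed.

Lemma clean_sound l : tI (clean l) = tI l.
Proof.
elim: l => [|[[z e] w] l IH] //=.
case: (Z.eqb_spec z Z0) => [->|_] /=; first by rewrite dR0 scale0r add0r IH.
by rewrite IH.
Qed.

Lemma norm_sound k l : tI (norm k l) = tI l.
Proof.
elim: k l => [|k IH] l //=.
by rewrite IH clean_sound collect_sound step_sound.
Qed.

Lemma reflect_zero k e : norm k (expand e) = [::] -> interp e = 0.
Proof. by move=> h; rewrite expand_sound -(norm_sound k) h. Qed.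

End Sem.


Definition gE := Gen 2. Definition gF := Gen 0. Definition gH := Gen 1.
Definition eA := Inv 4 (Mul (Add (Add gE gF) (Opp (Nat 2))) (Add (Add gE gF) (Nat 2))).
Definition eB := Inv 4 (Mul (Add gH (Opp (Nat 2))) (Add gH (Nat 2))).
Definition eC := Inv 4 (Add (Opp (Mul (Add gE (Opp gF)) (Add gE (Opp gF)))) (Opp (Nat 4))).
Definition eD := Inv 6 (Add (Mul (Add gH (Nat 2)) (Pow gF 2)) (Opp (Mul (Add gH (Opp (Nat 2))) (Pow gE 2)))).
Definition comm_e a b := Add (Mul a b) (Opp (Mul b a)).
Definition alpha_e a b c d := Add (Add (comm_e a d) (Mul a c)) (Opp (Mul b a)).
Definition beta_e a b c d := Add (Add (comm_e b d) (Mul b a)) (Opp (Mul c b)).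
Definition gamma_e a b c d := Add (Add (comm_e c d) (Mul c b)) (Opp (Mul a c)).
Definition delta_e a b c := Add (Add a b) c.
Definition OmA_e a b c d :=
  Add (Add (Add (Add (Add (Pow d 2) (Inv 1 (Add (Mul (Mul b a) c) (Mul (Mul c a) b)))) (Pow a 2))
  (Mul b (gamma_e a b c d))) (Opp (Mul c (beta_e a b c d)))) (Opp (Mul a (delta_e a b c))).
Definition OmB_e a b c d :=
  Add (Add (Add (Add (Add (Pow d 2) (Inv 1 (Add (Mul (Mul c b) a) (Mul (Mul a b) c)))) (Pow b 2))
  (Mul c (alpha_e a b c d))) (Opp (Mul a (gamma_e a b c d)))) (Opp (Mul b (delta_e a b c))).
Definition OmC_e a b c d :=
  Add (Add (Add (Add (Add (Pow d 2) (Inv 1 (Add (Mul (Mul a c) b) (Mul (Mul b c) a)))) (Pow c 2))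
  (Mul a (beta_e a b c d))) (Opp (Mul b (alpha_e a b c d)))) (Opp (Mul c (delta_e a b c))).
Definition G_e v := Inv 8 (Opp (Mul (Nat 3) (Mul (Add (Mul (Nat 4) v) (Opp (Nat 3))) (Add (Mul (Nat 4) v) One)))).


Definition Gf (A : algType CC) (v : A) : A :=
  ((expn 2 8)%:R : CC)^-1 *: - (3%:R * ((4%:R * v - 3%:R) * (4%:R * v + 1))).

Section Key.
Variable A : algType CC.
Variables E F H : A.
Hypothesis Hsl : sl2_rel E F H.

Lemma sharpC_e : sharpC E F = interp E F H eC.
Proof.
rewrite /sharpC /=; congr (_ *: _).
rewrite -scalerBr; set X := iC *: (E - F).
have XX : X * X = - ((E - F) * (E - F)).
  by rewrite /X -(scalerAl iC (E-F)) -(scalerAr iC (E-F) (E-F)) scalerA iC2 scaleN1r.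
rewrite (mulrBl (X + 2%:R) X (2%:R)) (mulrDr X X 2%:R) (mulrDr 2%:R X 2%:R) XX.
rewrite (mulr_natr X 2) (mulr_natl X 2) -natrM.
by rewrite opprD addrA addrK.
Qed.

Lemma sharpdelta_e : sharpdelta E F H = interp E F H (delta_e eA eB eC).
Proof. by rewrite /sharpdelta sharpC_e. Qed.

Lemma key k : sharpOmega k E F H = Gf (sharpdelta E F H).
Proof.
have hz : forall o, norm 40 (expand (Add o (Opp (G_e (delta_e eA eB eC))))) = [::] ->
   interp E F H o = interp E F H (G_e (delta_e eA eB eC)).
  move=> o h; apply/eqP; rewrite -subr_eq0; apply/eqP; exact: (reflect_zero Hsl h).
rewrite sharpdelta_e.
transitivity (interp E F H (G_e (delta_e eA eB eC))); last by [].
case: k; rewrite /sharpOmega sharpC_e.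
- by apply: (hz (OmA_e eA eB eC eD)); vm_compute.
- by apply: (hz (OmB_e eA eB eC eD)); vm_compute.
- by apply: (hz (OmC_e eA eB eC eD)); vm_compute.
Qed.

Lemma delta_casimir : sharpdelta E F H =
  ((expn 2 4)%:R : CC)^-1 *: (2%:R * (E * F) + 2%:R * (F * E) + H * H - 12%:R).
Proof.
rewrite sharpdelta_e.
have h : norm 10 (expand (Add (delta_e eA eB eC) (Opp (Inv 4 (Add (Add (Add (Mul (Nat 2) (Mul gE gF))
   (Mul (Nat 2) (Mul gF gE))) (Mul gH gH)) (Opp (Nat 12))))))) = [::] by vm_compute.
by apply/eqP; rewrite -subr_eq0; apply/eqP; exact: (reflect_zero Hsl h).
Qed.
End Key.



Lemma sumD (N m : nat) (f : nat -> CC) :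
  \sum_(k < N) ((k : nat) == m)%:R * f k = (m < N)%N%:R * f m.
Proof.
elim: N => [|N IH]; first by rewrite big_ord0 ltn0 mul0r.
rewrite big_ord_recr /= IH; case: (ltngtP m N) => [h|h|->].
- have -> : (m < N.+1)%N = true by lia.
  by rewrite mul0r addr0.
- have -> : (m < N.+1)%N = false by lia.
  by rewrite !mul0r addr0.
- by rewrite ltnSn mul0r add0r.
Qed.

Section Mat.
Variable n : nat.
Definition hh (i : nat) : CC := n%:R - (2 * i)%:R.
Definition cc (j : nat) : nat := j * (n.+1 - j).
Definition Em : 'M[CC]_n.+1 := \matrix_(i, j) (((i : nat).+1 == j)%:R * (cc j)%:R).
Definition Fm : 'M[CC]_n.+1 := \matrix_(i, j) (((i : nat) == (j : nat).+1)%:R).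
Definition Hm : 'M[CC]_n.+1 := diag_mx (\row_(j < n.+1) hh j).

Lemma EF_E (i j : 'I_n.+1) : (Em * Fm) i j = ((i : nat) == j)%:R * (cc i.+1)%:R.
Proof.
rewrite -mulmxE mxE.
under eq_bigr => k _ do rewrite !mxE (eq_sym _ (k : nat)) -mulrA.
rewrite (sumD _ _ (fun k => (cc k)%:R * ((k == (j : nat).+1)%:R : CC))) eqSS.
case: ltnP => h; first by rewrite mul1r mulrC.
have hi : (i : nat) = n by have := ltn_ord i; lia.
by rewrite /cc hi subnn muln0 mul0r mulr0.
Qed.

Lemma FE_E (i j : 'I_n.+1) : (Fm * Em) i j = ((i : nat) == j)%:R * (cc i)%:R.
Proof.
rewrite -mulmxE mxE.
case: i => [[|i'] Hi].
  rewrite big1; first by rewrite /cc mul0n mulr0.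
  by move=> k _; rewrite !mxE mul0r.
under eq_bigr => k _ do rewrite !mxE eqSS (eq_sym i' (k : nat)).
rewrite (sumD _ _ (fun k => ((k.+1 == (j : nat))%:R * (cc j)%:R : CC))).
have -> : (i' < n.+1)%N = true by apply: ltnW.
rewrite mul1r; case: eqP => [<-|_] //; by rewrite !mul0r.
Qed.
Lemma sl2_mat : sl2_rel Em Fm Hm.
Proof.
split.
- apply/matrixP => i j; rewrite /comm mulr_natl -!mulmxE mul_diag_mx mul_mx_diag mulmxnE !mxE.
  case: eqP => [h|_]; last by rewrite !mul0r mulr0 subrr mul0rn.
  rewrite -h !mul1r /hh; ring.
- apply/matrixP => i j; rewrite /comm mulr_natl -!mulmxE mul_diag_mx mul_mx_diag !mxE.
  case: eqP => [h|_]; last by rewrite mulr0 mul0r subrr addr0 oppr0.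
  rewrite /hh h; ring.
- apply/matrixP => i j; rewrite /comm.
  have -> : (Em * Fm - Fm * Em) i j = (Em * Fm) i j - (Fm * Em) i j by rewrite !mxE.
  rewrite EF_E FE_E /Hm !mxE.
  case: (eqVneq i j) => [<-|ne]; last first.
    have -> : ((i : nat) == j) = false by apply/negbTE; rewrite val_eqE.
    by rewrite !mul0r subrr mulr0n.
  have hi : (i <= n)%N by rewrite -ltnS ltn_ord.
  have hi' : (i <= n.+1)%N by apply: leqW.
  rewrite eqxx !mul1r mulr1n /cc /hh subSS !natrM (natrB _ hi) (natrB _ hi').
  ring.
Qed.

Lemma casimir_mat : 2%:R * (Em * Fm) + 2%:R * (Fm * Em) + Hm * Hm = (n * (n + 2))%:R :> 'M[CC]_n.+1.
Proof.
apply/matrixP => i j.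
have -> : (2%:R * (Em * Fm) + 2%:R * (Fm * Em) + Hm * Hm) i j =
   (Em * Fm) i j *+ 2 + (Fm * Em) i j *+ 2 + (Hm * Hm) i j.
  by rewrite !mulr_natl !mxE.
rewrite EF_E FE_E -mulmxE mulmx_diag /Hm !mxE mulmxnE !mxE.
case: (eqVneq i j) => [<-|ne]; last first.
  have -> : ((i : nat) == j) = false by apply/negbTE; rewrite val_eqE.
  by rewrite !mul0r !mul0rn !addr0.
have hi : (i <= n)%N by rewrite -ltnS ltn_ord.
have hi' : (i <= n.+1)%N by apply: leqW.
rewrite eqxx !mul1r !mulr1n /cc /hh subSS !natrM (natrB _ hi) (natrB _ hi').
ring.
Qed.
End Mat.



Lemma sum_widen (V : nmodType) (s m : nat) (f : nat -> V) : (s <= m)%N ->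
  (forall j, (s <= j)%N -> f j = 0) -> \sum_(j < s) f j = \sum_(j < m) f j.
Proof.
move=> le h; rewrite (big_ord_widen m f le) big_mkcond /=; apply: eq_bigr => j _.
by case: ltnP => // hj; rewrite h.
Qed.

Lemma coef_expand (q : {poly CC}) (N : nat) : (size q <= N)%N ->
  q = \sum_(i < N) q`_i *: 'X^i.
Proof.
move=> hs; apply/polyP => k; rewrite coef_sum.
under eq_bigr => i _ do rewrite coefZ coefXn mulrC eq_sym.
rewrite (sumD N k (fun i => q`_i)).
case: ltnP => h; first by rewrite mul1r.
by rewrite mul0r nth_default // (leq_trans hs h).
Qed.

Fact gp_key : unit. Proof. exact: tt. Qed.
Definition gp : {poly CC} := locked_with gp_key
  (((expn 2 8)%:R : CC)^-1 *: - (3%:R * ((4%:R * 'X - 3%:R) * (4%:R * 'X + 1)))).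
Lemma gpE : gp = ((expn 2 8)%:R : CC)^-1 *: - (3%:R * ((4%:R * 'X - 3%:R) * (4%:R * 'X + 1))).
Proof. by rewrite /gp unlock. Qed.
Definition Phi (p : {poly {poly CC}}) : {poly CC} := (swapXY p).[gp].

Lemma ha_gp (A : algType CC) (v : A) : horner_alg v gp = Gf v.
Proof.
rewrite gpE linearZ /= mulr_algl.
rewrite !(rmorph_nat, rmorphN, rmorphM, rmorphB, rmorphD, rmorph1) /= !horner_algX.
by [].
Qed.

Lemma ha_scaleX (A : algType CC) (v : A) (c : CC) i :
  horner_alg v (c *: 'X^i) = c *: (horner_alg v 'X) ^+ i.
Proof. by rewrite linearZ /= mulr_algl rmorphXn. Qed.

Lemma peval_Phi' (A : algType CC) (v : A) p :
  peval2 p (horner_alg v gp) (horner_alg v 'X) = horner_alg v (Phi p).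
Proof.
pose N := size p; pose M := sizeY p.
have S1 : peval2 p (horner_alg v gp) (horner_alg v 'X) = \sum_(i < N) \sum_(j < M)
    p`_i`_j *: (horner_alg v gp ^+ j * horner_alg v 'X ^+ i).
  rewrite /peval2; apply: eq_bigr => i _.
  apply: (@sum_widen A _ _ (fun j : nat => p`_i`_j *: (horner_alg v gp ^+ j * horner_alg v 'X ^+ i))); first exact: max_size_coefXY.
  by move=> j hj; rewrite nth_default // scale0r.
have Sw : forall j, (swapXY p)`_j = \sum_(i < N) p`_i`_j *: 'X^i.
  move=> j; rewrite {1}(@coef_expand ((swapXY p)`_j) N).
    by apply: eq_bigr => i _; rewrite coef_swapXY.
  apply/leq_sizeP => i hi.
  by rewrite coef_swapXY [p`_i]nth_default // coef0.
rewrite S1 /Phi (horner_coef_wide gp (_ : size (swapXY p) <= M)%N); last by rewrite -sizeYE.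
rewrite rmorph_sum exchange_big /=; apply: eq_bigr => j _.
rewrite rmorphM rmorphXn /= Sw rmorph_sum mulr_suml; apply: eq_bigr => i _.
transitivity ((p`_i`_j *: horner_alg v 'X ^+ i) * horner_alg v gp ^+ j); last first.
  exact: (congr1 (fun x => x * _) (esym (ha_scaleX v (p`_i`_j) i))).
have hc : GRing.comm (horner_alg v gp ^+ j) (horner_alg v 'X ^+ i).
  by rewrite /GRing.comm -!rmorphXn -!rmorphM mulrC.
by rewrite -scalerAl hc.
Qed.

Lemma peval_Phi (A : algType CC) (v : A) p :
  peval2 p (Gf v) v = horner_alg v (Phi p).
Proof. by rewrite -peval_Phi' ha_gp horner_algX. Qed.

Lemma Phi_mul p q : Phi (p * q) = Phi p * Phi q.
Proof. by rewrite /Phi rmorphM hornerM. Qed.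

Lemma h256 : ((expn 2 8)%:R^-1 : CC) *+ 256 = 1.
Proof. rewrite -(mulr_natl ((expn 2 8)%:R^-1 : CC) 256); exact: (mulfV (natC_neq0 255)). Qed.

Lemma aux_fxy (R : comRingType) (Y X k : R) : k *+ 256 = 1 ->
  256%:R * Y + 3%:R * (4%:R * X - 3%:R) * (4%:R * X + 1) =
  (Y - k * - (3%:R * ((4%:R * X - 3%:R) * (4%:R * X + 1)))) *+ 256.
Proof. move=> hk; rewrite mulrnBl -mulrnAl hk mul1r; ring. Qed.

Lemma fxyE : fxy = ('X%:P - gp^:P) *+ 256.
Proof.
rewrite gpE map_polyZ /=.
rewrite !(rmorph_nat, rmorphN, rmorphM, rmorphB, rmorphD, rmorph1) /= !map_polyX.
rewrite -mul_polyC /fxy /polX /polY; apply: aux_fxy.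
by rewrite -!polyCMn h256.
Qed.

Lemma Phi_fxy : Phi fxy = 0.
Proof.
rewrite /Phi fxyE rmorphMn /= rmorphB /= swapXY_Y swapXY_map_polyC.
by rewrite hornerMn hornerD hornerN hornerX hornerC subrr mul0rn.
Qed.

Lemma aux_div (R : comRingType) (a b k : R) : k *+ 256 = 1 -> a * b = a * k * (b *+ 256).
Proof. by move=> hk; rewrite -mulrA mulrnAr -mulrnAl hk mul1r. Qed.

Lemma Phi_div p : Phi p = 0 -> exists q, p = q * fxy.
Proof.
move=> h; have /factor_theorem [Q hQ] : root (swapXY p) gp by apply/eqP.
exists (swapXY Q * (((expn 2 8)%:R^-1 : CC)%:P%:P)).
rewrite -[p]swapXYK hQ rmorphM /= rmorphB /= swapXY_X swapXY_polyC fxyE.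
apply: aux_div; by rewrite -!polyCMn h256.
Qed.



Definition lam (n : nat) : CC := ((expn 2 4)%:R)^-1 * ((n * (n + 2))%:R - 12%:R).

Lemma delta_mat n : sharpdelta (Em n) (Fm n) (Hm n) = (lam n)%:A.
Proof.
rewrite (delta_casimir (sl2_mat n)) casimir_mat /lam -scalerA scalerBl !scaler_nat.
by [].
Qed.

Lemma ha_scalar (A : algType CC) (x : CC) q : horner_alg (x%:A : A) q = (q.[x])%:A.
Proof.
elim/poly_ind: q => [|q c IH]; first by rewrite rmorph0 horner0 scale0r.
rewrite rmorphD /= rmorphM /= IH horner_algX horner_algC hornerMXaddC.
by rewrite mulr_algl scalerDl scalerA.
Qed.

Lemma lam_inj : injective lam.
Proof.
move=> m n; rewrite /lam => /mulfI h.
have /h /addIr /natC_inj : ((expn 2 4)%:R : CC)^-1 != 0 by rewrite invr_eq0 (natC_neq0 15).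
by nia.
Qed.

Theorem lemma5p1 (k : OmegaIdx) (p : {poly {poly CC}}) :
  U_sl2_zero (fun (A : algType CC) (E F H : A) =>
                peval2 p (sharpOmega k E F H) (sharpdelta E F H))
  <-> (exists q : {poly {poly CC}}, p = q * fxy).
Proof.
split; last first.
  move=> [q ->] A E F H hsl /=.
  by rewrite (key hsl k) peval_Phi Phi_mul Phi_fxy mulr0 rmorph0.
move=> hz; apply: Phi_div.
have hr : forall n, (Phi p).[lam n] = 0.
  move=> n; have := hz _ _ _ _ (sl2_mat n).
  rewrite /= (key (sl2_mat n) k) peval_Phi delta_mat ha_scalar => /eqP.
  by rewrite scaler_eq0 oner_eq0 orbF => /eqP.
apply: (@roots_geq_poly_eq0 _ _ [seq lam n | n <- iota 0 (size (Phi p))]).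
- by apply/allP => x /mapP [n _ ->]; rewrite /root hr.
- by rewrite map_inj_uniq ?iota_uniq //; exact: lam_inj.
- by rewrite size_map size_iota.
Qed.
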